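(* Let $(\mathcal A,\mathbb E)$ be a $B$-valued probability space and $a,b\in\mathcal A$ free. If $\tau\in Y^{be}_{2n}$ and $\sigma\in Y^{bo}_{2n+1}$ ($n\ge0$), then for all $x_1,y_1,\dots,x_n,y_n,x_{n+1}\in B$, $$\kappa_\tau(x_1a,y_1b,\dots,x_na,y_nb)=(k^a\cup k^b)_\tau(x_1,y_1,\dots,x_n,y_n),$$ $$\kappa_\sigma(x_1a,y_1b,\dots,x_na,y_nb,x_{n+1}a)=(k^b\cup k^a)_\sigma(x_1,y_1,\dots,x_n,y_n,x_{n+1}).$$
   Context: $B$ is a unital algebra over a field $\mathbb K$ of characteristic zero. $B$-valued probability space $(\mathcal A,\mathbb E)$: $\mathcal A$ a unital $\mathbb K$-algebra and $B$-bimodule with all mixed triple products associative; $\mathbb E:\mathcal A\to B$ linear, unital, $\mathbb E(xay)=x\mathbb E(a)y$. Freeness of $a,b$: for the $B$-subalgebras $\mathcal A_1,\mathcal A_2$ they generate, $\mathbb E(a_1\cdots a_n)=0$ whenever $n\ge1$, each $\mathbb E(a_i)=0$, $a_i\in\mathcal A_{j_i}$, $j_i\neq j_{i+1}$. Planar binary trees: $Y_0=\{|\}$, $Y_n=\{\sigma\vee\tau:|\sigma|+|\tau|=n-1\}$ ($\sigma\vee\tau$: root with left subtree $\sigma$, right subtree $\tau$). Each $\tau\in Y_n$, $n\ge1$, is uniquely $\tau_1\vee(\tau_2\vee(\cdots\vee(\tau_k\vee|)))$; $j_i=|\tau_1|+\dots+|\tau_i|+i$. $Y^{be}=\{|\}\cup\{\sigma\vee\rho:\sigma\in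 Y^{bo},\rho\in Y^{be}\}$ and $Y^{bo}=\{\sigma\vee\rho:\sigma,\rho\in Y^{be}\}$ (joint recursive definition); subscripts indicate the number of vertices. Cumulants: multilinear $\kappa_n:\mathcal A^n\to B$ defined by $\mathbb E(a_1\cdots a_n)=\sum_{\tau\in Y_n}\kappa_\tau(a_1,\dots,a_n)$, $\kappa_|=1$, $\kappa_\tau(a_1,\dots,a_n)=\kappa_k(\kappa_{\tau_1}(a_1,\dots,a_{j_1-1})a_{j_1},\dots,\kappa_{\tau_k}(a_{j_{k-1}+1},\dots,a_{j_k-1})a_{j_k})$. For $c\in\mathcal A$: $k^c_0=0$, $k^c_n(x_1,\dots,x_n)=\kappa_n(x_1c,\dots,x_nc)$. For sequences $f,g$ of multilinear maps $B^n\to B$: $(f\cup g)_|=1$, $(f\cup g)_\tau(x_1,\dots,x_n)=g_k((g\cup f)_{\tau_1}(x_1,\dots,x_{j_1-1})x_{j_1},\dots,(g\cup f)_{\tau_k}(x_{j_{k-1}+1},\dots,x_{j_k-1})x_{j_k})$. *)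

(* Defs.v *)
From HB Require Import structures.
From mathcomp Require Import all_boot all_order all_algebra.
Set Implicit Arguments. Unset Strict Implicit. Unset Printing Implicit Defensive.
Import GRing.Theory.
Local Open Scope ring_scope.

Section BProb.
Variables (K : fieldType) (B A : algType K).
Variables (lmul : B -> A -> A) (rmul : A -> B -> A) (E : A -> B).

Record BProbSpace : Prop := {
  lmulDl : forall x y u, lmul (x + y) u = lmul x u + lmul y u;
  lmulDr : forall x u v, lmul x (u + v) = lmul x u + lmul x v;
  lmulZl : forall k x u, lmul (k *: x) u = k *: lmul x u;
  lmulZr : forall k x u, lmul x (k *: u) = k *: lmul x u;
  lmul1  : forall u, lmul 1 u = u;
  lmulA  : forall x y u, lmul (x * y) u = lmul x (lmul y u);
  rmulDl : forall u v x, rmul (u + v) x = rmul u x + rmul v x;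
  rmulDr : forall u x y, rmul u (x + y) = rmul u x + rmul u y;
  rmulZl : forall k u x, rmul (k *: u) x = k *: rmul u x;
  rmulZr : forall k u x, rmul u (k *: x) = k *: rmul u x;
  rmul1  : forall u, rmul u 1 = u;
  rmulA  : forall u x y, rmul u (x * y) = rmul (rmul u x) y;
  lrmulA : forall x u y, rmul (lmul x u) y = lmul x (rmul u y);
  mix_BAA : forall x u v, lmul x u * v = lmul x (u * v);
  mix_ABA : forall u x v, rmul u x * v = u * lmul x v;
  mix_AAB : forall u v x, rmul (u * v) x = u * rmul v x;
  E_linear : forall k u v, E (k *: u + v) = k *: E u + E v;
  E_unital : E 1 = 1;
  E_bimod  : forall x u y, E (lmul x (rmul u y)) = x * E u * y
}.

Inductive Bgen (c : A) : A -> Prop :=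
  | Bgen_gen : Bgen c c
  | Bgen_one : Bgen c 1
  | Bgen_add u v : Bgen c u -> Bgen c v -> Bgen c (u + v)
  | Bgen_scale k u : Bgen c u -> Bgen c (k *: u)
  | Bgen_mul u v : Bgen c u -> Bgen c v -> Bgen c (u * v)
  | Bgen_lmul x u : Bgen c u -> Bgen c (lmul x u)
  | Bgen_rmul u x : Bgen c u -> Bgen c (rmul u x).

Definition Bfree (a b : A) : Prop :=
  forall (n : nat) (u : nat -> A) (j : nat -> bool),
    (0 < n)%N ->
    (forall i, (i < n)%N -> Bgen (if j i then b else a) (u i) /\ E (u i) = 0) ->
    (forall i, (i.+1 < n)%N -> j i != j i.+1) ->
    E (\prod_(i < n) u i) = 0.
End BProb.

Inductive tree : Type := Leaf : tree | Node : tree -> tree -> tree.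

Fixpoint tverts (t : tree) : nat :=
  match t with Leaf => 0%N | Node l r => (tverts l + tverts r).+1 end.

Fixpoint trees_h (h : nat) : seq tree :=
  match h with
  | 0%N => [:: Leaf]
  | h'.+1 => Leaf :: [seq Node l r | l <- trees_h h', r <- trees_h h']
  end.

(* Y_n : the trees with n vertices (such a tree has height <= n) *)
Definition Y (n : nat) : seq tree := [seq t <- trees_h n | tverts t == n].

Fixpoint is_be (t : tree) : bool :=
  match t with Leaf => true | Node l r => is_bo l && is_be r end
with is_bo (t : tree) : bool :=
  match t with Leaf => false | Node l r => is_be l && is_be r end.

(* Writing t = t_1 v (t_2 v (... v (t_k v |))), the right spine is unfolded
   by [kargs]; the block of t_i consists of |t_i| arguments followed by
   a_{j_i}. kap s stands for kappa_{size s}(s). *)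
Section KappaTree.
Variables (K : fieldType) (B A : algType K) (lmul : B -> A -> A).
Variable kap : seq A -> B.

Fixpoint kappa_tree (t : tree) (s : seq A) : B :=
  match t with
  | Leaf => 1
  | Node l r =>
      kap (lmul (kappa_tree l (take (tverts l) s)) (nth 0 s (tverts l))
            :: kargs r (drop (tverts l).+1 s))
  end
with kargs (t : tree) (s : seq A) : seq A :=
  match t with
  | Leaf => [::]
  | Node l r =>
      lmul (kappa_tree l (take (tverts l) s)) (nth 0 s (tverts l))
        :: kargs r (drop (tverts l).+1 s)
  end.

(* kap is the family of cumulants: moment-cumulant formula for every n *)
Definition cumulants (E : A -> B) : Prop :=
  forall s : seq A, E (\prod_(u <- s) u) = \sum_(t <- Y (size s)) kappa_tree t s.

(* k^c_n(x_1,...,x_n) = kappa_n(x_1 c, ..., x_n c), k^c_0 = 0 *)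
Definition kc (c : A) (s : seq B) : B :=
  if s is [::] then 0 else kap [seq lmul x c | x <- s].
End KappaTree.

Section Cup.
Variables (K : fieldType) (B : algType K).

Fixpoint cup (f g : seq B -> B) (t : tree) (s : seq B) : B :=
  match t with
  | Leaf => 1
  | Node l r =>
      g (cup g f l (take (tverts l) s) * nth 0 s (tverts l)
           :: cargs f g r (drop (tverts l).+1 s))
  end
with cargs (f g : seq B -> B) (t : tree) (s : seq B) : seq B :=
  match t with
  | Leaf => [::]
  | Node l r =>
      cup g f l (take (tverts l) s) * nth 0 s (tverts l)
        :: cargs f g r (drop (tverts l).+1 s)
  end.
End Cup.

Definition alt (K : fieldType) (B A : algType K) (lmul : B -> A -> A)
  (a b : A) (z : nat -> B) (m : nat) : seq A :=
  [seq lmul (z i) (if odd i then b else a) | i <- iota 0 m].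

(* Main.v *)
Require Import Defs.
From HB Require Import structures.
From mathcomp Require Import all_boot all_order all_algebra.
Local Open Scope ring_scope.

Lemma take_mk (T : Type) (f : nat -> T) k n : (k <= n)%N ->
  take k (mkseq f n) = mkseq f k.
Proof. by move=> kn; rewrite /mkseq -map_take take_iota (minn_idPl kn). Qed.

Lemma drop_mk (T : Type) (f : nat -> T) k n :
  drop k (mkseq f n) = mkseq (fun i => f (i + k)%N) (n - k).
Proof.
rewrite /mkseq -map_drop drop_iota add0n -[k]addn0 iotaDl -map_comp addn0.
by apply: eq_map => i /=; rewrite addnC.
Qed.

Lemma drop_mk1 (T : Type) (f : nat -> T) k m :
  drop k [seq f i | i <- iota 1 m] = mkseq (fun i => f (i + k.+1)%N) (m - k).
Proof.
have -> : [seq f i | i <- iota 1 m] = drop 1 (mkseq f m.+1).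
  by rewrite /mkseq -map_drop drop_iota add0n subSS subn0.
by rewrite drop_drop drop_mk addn1 subSS.
Qed.

Lemma parity (t : tree) :
  (is_be t -> ~~ odd (tverts t)) /\ (is_bo t -> odd (tverts t)).
Proof.
elim: t => [|l [IHl1 IHl2] r [IHr1 IHr2]] //=.
split=> /andP[bl br].
  by rewrite addnC oddD (negbTE (IHr1 br)) (IHl2 bl).
by rewrite oddD (negbTE (IHr1 br)) (negbTE (IHl1 bl)).
Qed.

Section Main.
Variables (K : fieldType) (B A : algType K) (lmul : B -> A -> A) (kappa : seq A -> B).
Hypothesis lmulA : forall x y u, lmul (x * y) u = lmul x (lmul y u).

Definition mk (c d : A) (z : nat -> B) n :=
  mkseq (fun i => lmul (z i) (if odd i then d else c)) n.

Lemma main_ind (t : tree) : forall c d z,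
  (is_be t -> kappa_tree lmul kappa t (mk c d z (tverts t))
     = cup (kc lmul kappa c) (kc lmul kappa d) t (mkseq z (tverts t))) /\
  (is_bo t -> kappa_tree lmul kappa t (mk c d z (tverts t))
     = cup (kc lmul kappa d) (kc lmul kappa c) t (mkseq z (tverts t))) /\
  (is_be t -> kargs lmul kappa t (mk c d z (tverts t))
     = map (fun x => lmul x d) (cargs (kc lmul kappa c) (kc lmul kappa d) t (mkseq z (tverts t)))).
Proof.
elim: t => [|l IHl r IHr] c d z; first by [].
have Hl : (tverts l <= (tverts l + tverts r).+1)%N by rewrite /= leqW // leq_addr.
have Hn : (tverts l < (tverts l + tverts r).+1)%N by rewrite /= ltnS leq_addr.
have Hr : (tverts l + tverts r - tverts l = tverts r)%N by rewrite addKn.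
set S := mk c d z _; set T := mkseq z _.
rewrite /=.
rewrite /S /T /mk.
rewrite !(take_mk _ _ _ _ Hl) !drop_mk1 !(nth_mkseq _ _ Hn) Hr.
have E1 : forall c' d', mkseq (fun i => lmul (z (i + (tverts l).+1)%N)
      (if odd (i + (tverts l).+1) then d' else c')) (tverts r)
   = if odd (tverts l) then mk c' d' (fun i => z (i + (tverts l).+1)%N) (tverts r)
     else mk d' c' (fun i => z (i + (tverts l).+1)%N) (tverts r).
  move=> c' d'; rewrite /mk; case: ifP => Ho; apply: eq_mkseq => i;
    by rewrite oddD /= Ho; case: (odd i).
rewrite !E1 -/(mk c d z (tverts l)).
split; [|split].
- case/andP=> bl br; rewrite ((parity l).2 bl) (IHl c d z).2.1 // -lmulA.
  by rewrite (IHr c d _).2.2.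
- case/andP=> bl br; rewrite (negbTE ((parity l).1 bl)) (IHl c d z).1 // -lmulA.
  by rewrite (IHr d c _).2.2.
- case/andP=> bl br; rewrite ((parity l).2 bl) (IHl c d z).2.1 // -lmulA.
  by rewrite (IHr c d _).2.2.
Qed.

End Main.

Theorem lemma4 (K : fieldType) (B A : algType K)
  (lmul : B -> A -> A) (rmul : A -> B -> A) (E : A -> B)
  (kappa : seq A -> B) (a b : A) :
  [pchar K] =i pred0 ->
  BProbSpace lmul rmul E ->
  Bfree lmul rmul E a b ->
  cumulants lmul kappa E ->
  forall (n : nat) (z : nat -> B),
    (forall tau : tree, is_be tau -> tverts tau = n.*2 ->
       kappa_tree lmul kappa tau (alt lmul a b z n.*2)
       = cup (kc lmul kappa a) (kc lmul kappa b) tau (mkseq z n.*2)) /\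
    (forall sigma : tree, is_bo sigma -> tverts sigma = n.*2.+1 ->
       kappa_tree lmul kappa sigma (alt lmul a b z n.*2.+1)
       = cup (kc lmul kappa b) (kc lmul kappa a) sigma (mkseq z n.*2.+1)).
Proof.
move=> _ HP _ _ n z.
have lA : forall x y u, lmul (x * y) u = lmul x (lmul y u) by move=> *; exact: (lmulA HP).
split=> t bt <-.
  exact: ((@main_ind K B A lmul kappa lA t a b z).1 bt).
exact: ((@main_ind K B A lmul kappa lA t a b z).2.1 bt).
Qed.
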